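(* Let $R$ be a ring such that the set $\max\mathrm{Den}_l(R)$ of maximal left denominator sets of $R$ is finite, $\max\mathrm{Den}_l(R)=\{S_1,\ldots,S_n\}$ (with the $S_i$ distinct). Let $\mathfrak{a}_i:=\mathrm{ass}(S_i)$, let $\sigma_i:R\to R_i:=S_i^{-1}R$, $r\mapsto \frac{r}{1}=r_i$, and let $\sigma:=\prod_{i=1}^n\sigma_i:R\to\prod_{i=1}^n R_i$, $r\mapsto (r_1,\ldots,r_n)$. The following statements are equivalent: (1) $R$ is a left localizable ring; (2) $\mathfrak{l}_R=0$ and the rings $R_1,\ldots,R_n$ are division rings; (3) the homomorphism $\sigma$ is injective and the rings $R_1,\ldots,R_n$ are division rings.
   Context: All rings are associative with $1$. A multiplicative subset $S$ of a ring $R$ is a subset with $1\in S$, $0\notin S$, closed under multiplication. It is a left Ore set if $Sr\cap Rs\neq\emptyset$ for all $r\in R$, $s\in S$. For a left Ore set $S$, $\mathrm{ass}(S):=\{r\in R: sr=0 \text{ for some } s\in S\}$. A left Ore set $S$ is a left denominator set if $rs=0$ with $r\in R$, $s\in S$ implies $tr=0$ for some $t\in S$. $\mathrm{Den}_l(R)$ denotes the set of left denominator sets of $R$, $S^{-1}R$ the left localization (ring of left fractions $s^{-1}r$) of $R$ at $S\in\mathrm{Den}_l(R)$, and $\max\mathrm{Den}_l(R)$ the set of maximal elements of the poset $(\mathrm{Den}_l(R),\subseteq)$. The left localization radical is $\mathfrak{l}_R:=\bigcap_{S\in\max\mathrm{Den}_l(R)}\mathrm{ass}(S)$. An element $r\in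 R$ is left localizable if $r\in S$ for some $S\in\mathrm{Den}_l(R)$; a ring $R$ is a left localizable ring if every nonzero element of $R$ is left localizable. *)

(* Defs.v *)
From HB Require Import structures.
From mathcomp Require Import all_boot all_order all_algebra.
Set Implicit Arguments. Unset Strict Implicit. Unset Printing Implicit Defensive.
Import GRing.Theory.
Local Open Scope ring_scope.

Section Defs.
Variable R : pzRingType.

Definition mult_subset (S : R -> Prop) : Prop :=
  S 1 /\ ~ S 0 /\ (forall a b, S a -> S b -> S (a * b)).

Definition left_ore (S : R -> Prop) : Prop :=
  mult_subset S /\
  (forall r s, S s -> exists s' r', S s' /\ s' * r = r' * s).

Definition ass (S : R -> Prop) (r : R) : Prop := exists s, S s /\ s * r = 0.

Definition left_den (S : R -> Prop) : Prop :=
  left_ore S /\ (forall r s, S s -> r * s = 0 -> exists t, S t /\ t * r = 0).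

Definition max_left_den (S : R -> Prop) : Prop :=
  left_den S /\
  (forall T, left_den T -> (forall x, S x -> T x) -> forall x, T x -> S x).

Definition lrad (r : R) : Prop := forall S, max_left_den S -> ass S r.

Definition left_localizable_elt (r : R) : Prop := exists S, left_den S /\ S r.

Definition left_localizable_ring : Prop :=
  forall r : R, r != 0 -> left_localizable_elt r.

(* (Q, f) is the left localization S^{-1}R of R at S (ring of left fractions
   s^{-1} r), characterized in the standard way: images of S are units,
   every element is a left fraction f(s)^{-1} f(r), and ker f = ass(S). *)
Definition is_left_localization (S : R -> Prop) (Q : pzRingType)
    (f : {rmorphism R -> Q}) : Prop :=
  [/\ (forall s, S s -> exists u, u * f s = 1 /\ f s * u = 1),
      (forall q : Q, exists s r, S s /\
         exists u, [/\ u * f s = 1, f s * u = 1 & q = u * f r])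
    & (forall r, f r = 0 <-> ass S r)].
End Defs.

Definition is_division_ring (Q : pzRingType) : Prop :=
  (1 : Q) != 0 /\ forall x : Q, x != 0 -> exists y, x * y = 1 /\ y * x = 1.

(* Main.v *)
Require Import Defs.
From HB Require Import structures.
From mathcomp Require Import all_boot all_order all_algebra.
From mathcomp Require classical_sets.
From Stdlib Require Import Classical.
Import GRing.Theory.
Local Open Scope ring_scope.
Set Implicit Arguments. Unset Strict Implicit.

Section Red.
Variable R : pzRingType.
Hypothesis red : forall x : R, x * x = 0 -> x = 0.

Lemma red_comm (x y : R) : x * y = 0 -> y * x = 0.
Proof.
move=> h; apply: red.
have -> : (y * x) * (y * x) = y * (x * y) * x by rewrite !mulrA.
by rewrite h mulr0 mul0r.
Qed.

Lemma red_ins (x y z : R) : x * y = 0 -> x * z * y = 0.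
Proof.
move=> h; apply: red; have h' := red_comm h.
have -> : (x * z * y) * (x * z * y) = (x * z) * (y * x) * (z * y) by rewrite !mulrA.
by rewrite h' mulr0 mul0r.
Qed.

Lemma red_bac (a b c : R) : a * b * c = 0 -> b * a * c = 0.
Proof.
move=> h.
have h1 : a * (b * c) = 0 by rewrite mulrA.
have h2 : a * c * (b * c) = 0 := red_ins c h1.
have h3 : a * c * b * c = 0 by rewrite mulrA in h2.
have h4 : a * c * b * a * c = 0 := red_ins a h3.
apply: red.
have -> : (b * a * c) * (b * a * c) = b * (a * c * b * a * c) by rewrite !mulrA.
by rewrite h4 mulr0.
Qed.

Lemma red_acb (a b c : R) : a * b * c = 0 -> a * c * b = 0.
Proof.
move=> h; have h1 := red_comm h.
have h2 : c * a * b = 0 by rewrite mulrA in h1.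
exact: red_bac h2.
Qed.

Lemma red_swap (x u v y : R) : x * u * v * y = 0 -> x * v * u * y = 0.
Proof.
move=> h; have h1 := red_comm h.
have h2 : y * x * u * v = 0 by rewrite !mulrA in h1.
have h3 := red_acb h2.
have h4 : y * (x * v * u) = 0 by rewrite !mulrA.
exact: red_comm h4.
Qed.

Inductive gen (S T : R -> Prop) : R -> Prop :=
| gen_S x : S x -> gen S T x
| gen_T x : T x -> gen S T x
| gen_M x y : gen S T x -> gen S T y -> gen S T (x * y).

Lemma gen_den (S T : R -> Prop) : left_den S -> left_den T ->
  (forall s t, S s -> T t -> s * t <> 0) -> left_den (gen S T).
Proof.
move=> [[[S1 [S0 SM]] SO] SD] [[[T1 [T0 TM]] TO] TD] Hst.
have inv : forall x, gen S T x -> exists s t, [/\ S s, T t &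
   forall a b, a * x * b = 0 -> a * (s * t) * b = 0].
  move=> x; elim=> {x}.
  - by move=> x Sx; exists x, 1; split => // a b; rewrite mulr1.
  - by move=> x Tx; exists 1, x; split => // a b; rewrite mul1r.
  - move=> x y _ [s1 [t1 [Ss1 Tt1 H1]]] _ [s2 [t2 [Ss2 Tt2 H2]]].
    exists (s1 * s2), (t1 * t2); split; [exact: SM|exact: TM|].
    move=> a b h.
    have e1 : a * x * (y * b) = 0 by move: h; rewrite !mulrA.
    have e2 := H1 _ _ e1.
    have e3 : (a * (s1 * t1)) * y * b = 0 by move: e2; rewrite !mulrA.
    have e4 := H2 _ _ e3.
    have e5 : (a * s1) * t1 * s2 * (t2 * b) = 0 by move: e4; rewrite !mulrA.
    have e6 := red_swap e5.
    by move: e6; rewrite !mulrA.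
split; [split; [split; [|split]|] |].
- exact: gen_S.
- move=> /inv [s [t [Ss Tt H]]]; apply: (Hst s t Ss Tt).
  by have := H 1 1; rewrite !mul1r !mulr1 => /(_ erefl).
- by move=> a b; apply: gen_M.
- move=> r x gx; elim: gx r => {x}.
  + move=> x Sx r; have [s' [r' [Ss' e]]] := SO r x Sx.
    by exists s', r'; split => //; apply: gen_S.
  + move=> x Tx r; have [s' [r' [Ss' e]]] := TO r x Tx.
    by exists s', r'; split => //; apply: gen_T.
  + move=> x y _ IHx _ IHy r.
    have [u2 [r2 [g2 e2]]] := IHy r.
    have [u1 [r1 [g1 e1]]] := IHx r2.
    exists (u1 * u2), r1; split; first exact: gen_M.
    by rewrite -mulrA e2 mulrA e1 mulrA.
- move=> r x gx h; exists x; split => //; exact: red_comm.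
Qed.

End Red.

Section Loc.
Variable R : pzRingType.

Lemma ass_mulr (S : R -> Prop) y z : ass S y -> ass S (y * z).
Proof. by move=> [s [Ss e]]; exists s; split => //; rewrite mulrA e mul0r. Qed.

Lemma ass_mull (S : R -> Prop) r y : left_ore S -> ass S y -> ass S (r * y).
Proof.
move=> [_ O] [s [Ss e]]; have [s' [r' [Ss' e']]] := O r s Ss.
by exists s'; split => //; rewrite mulrA e' -mulrA e mulr0.
Qed.

Lemma ass_ext (S T : R -> Prop) r : (forall x, S x <-> T x) -> ass S r -> ass T r.
Proof. by move=> E [s [Ss e]]; exists s; split => //; apply/E. Qed.

Lemma zorn_den (T0 : R -> Prop) : left_den T0 ->
  exists A, max_left_den A /\ (forall x, T0 x -> A x).
Proof.
move=> DT0.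
pose P := fun X : R -> Prop => (forall x, ~ X x) \/ (left_den X /\ forall x, T0 x -> X x).
have PE : forall X x, P X -> X x -> left_den X /\ forall x, T0 x -> X x.
  by move=> X x [h|h] Xx //; case: (h x Xx).
have := @classical_sets.Zorn_bigcup R P.
case.
- move=> F FP Ftot.
  set U := classical_sets.bigcup F id.
  have Umem : forall x, U x -> exists2 X, F X & X x.
    by move=> x [X FX Xx]; exists X.
  have UI : forall X x, F X -> X x -> U x by move=> X x FX Xx; exists X.
  case: (classic (exists x, U x)) => [[x0 Ux0]|nU]; last first.
    by left => x Ux; apply: nU; exists x.
  right; have [X0 FX0 X0x0] := Umem _ Ux0.
  have [DX0 TX0] := PE X0 x0 (FP _ FX0) X0x0.
  split; last by move=> x Tx; apply: (UI X0) => //; apply: TX0.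
  split; [split; [split; [|split]|]|].
  + by apply: (UI X0) => //; case: DX0 => [[[]]].
  + move=> /Umem [X FX HX0].
    by have [[[_ [h _]] _] _] := (PE X 0 (FP _ FX) HX0).1.
  + move=> a b /Umem [X FX Xa] /Umem [Y FY Yb].
    have [XY|YX] := Ftot X Y FX FY.
    * have [[[_ [_ h]] _] _] := (PE Y b (FP _ FY) Yb).1.
      by apply: (UI Y) => //; apply: h => //; apply: XY.
    * have [[[_ [_ h]] _] _] := (PE X a (FP _ FX) Xa).1.
      by apply: (UI X) => //; apply: h => //; apply: YX.
  + move=> r s /Umem [X FX Xs].
    have [[_ h] _] := (PE X s (FP _ FX) Xs).1.
    have [s' [r' [Xs' e]]] := h r s Xs.
    by exists s', r'; split => //; apply: (UI X).
  + move=> r s /Umem [X FX Xs] e.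
    have [_ h] := (PE X s (FP _ FX) Xs).1.
    have [t [Xt e']] := h r s Xs e.
    by exists t; split => //; apply: (UI X).
- move=> A [PA maxA].
  have [DT01 _] : T0 1 /\ True by case: DT0 => [[[]]].
  case: PA => [nA|[DA TA]].
    exfalso; apply: (maxA T0); last by right; split.
    by split; [move=> x /nA|move=> /(_ 1 DT01) /nA].
  exists A; split => //; split => // T DT AT x Tx.
  apply: NNPP => nAx; apply: (maxA T).
    by split => // h; apply: nAx; apply: h.
  by right; split => // y /TA /AT.
Qed.

End Loc.

Unset Implicit Arguments.


Theorem theorem3p5 (R : pzRingType) (n : nat) (S : 'I_n -> R -> Prop)
    (Q : 'I_n -> pzRingType) (f : forall i, {rmorphism R -> Q i}) :
  (forall i j, (forall x, S i x <-> S j x) -> i = j) ->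
  (forall T : R -> Prop, max_left_den T <-> exists i, forall x, T x <-> S i x) ->
  (forall i, is_left_localization (S i) (f i)) ->
  (left_localizable_ring R <->
     ((forall r : R, lrad r -> r = 0) /\ (forall i, is_division_ring (Q i)))) /\
  (((forall r : R, lrad r -> r = 0) /\ (forall i, is_division_ring (Q i))) <->
     ((forall r1 r2 : R, (forall i, f i r1 = f i r2) -> r1 = r2) /\
      (forall i, is_division_ring (Q i)))).
Proof.
move=> Hdist Hmax Hloc.
have Smax : forall i, max_left_den (S i) by move=> i; apply/Hmax; exists i.
have Sden : forall i, left_den (S i) by move=> i; case: (Smax i).
have S1 : forall i, S i 1 by move=> i; case: (Sden i) => [[[]]].
have S0 : forall i, ~ S i 0 by move=> i; case: (Sden i) => [[[_ []]]].
have SM : forall i a b, S i a -> S i b -> S i (a * b).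
  by move=> i; case: (Sden i) => [[[_ [_ h]]]].
have SD : forall i r s, S i s -> r * s = 0 -> exists t, S i t /\ t * r = 0.
  by move=> i; case: (Sden i).
have lradE : forall r : R, lrad r <-> forall i, ass (S i) r.
  move=> r; split => [h i|h T /Hmax [i Ei]]; first by apply: h; apply: Smax.
  by apply: (ass_ext _ (h i)) => x; split => /Ei.
have kerE : forall i r, f i r = 0 <-> ass (S i) r.
  by move=> i r; case: (Hloc i) => _ _ h; apply: h.
have unitf : forall i s, S i s -> exists u, u * f i s = 1 /\ f i s * u = 1.
  by move=> i s Ss; case: (Hloc i) => h _ _; apply: h.
have surj : forall i (q : Q i), exists s r, S i s /\
   exists u, [/\ u * f i s = 1, f i s * u = 1 & q = u * f i r].
  by move=> i q; case: (Hloc i) => _ h _; apply: h.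
have one_ne0 : forall i, (1 : Q i) != 0.
  move=> i; apply/eqP => e.
  have : ass (S i) 1 by apply/kerE; rewrite rmorph1.
  by case=> s [Ss e']; rewrite mulr1 in e'; apply: (S0 i); rewrite -e'.
have sat : forall i r, (exists u, u * f i r = 1 /\ f i r * u = 1) -> S i r.
  move=> i r hr.
  pose S' x := exists u, u * f i x = 1 /\ f i x * u = 1.
  have DS' : left_den S'.
    split; [split; [split; [|split]|]|].
    - by exists 1; rewrite rmorph1 mulr1.
    - case=> u [e _]; rewrite raddf0 mulr0 in e.
      by move/eqP: (one_ne0 i); rewrite e.
    - move=> a b [u [e1 e2]] [v [e3 e4]]; exists (v * u); rewrite rmorphM; split.
        by rewrite -mulrA (mulrA u) e1 mul1r e3.
      by rewrite -mulrA (mulrA (f i b)) e4 mul1r e2.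
    - move=> r0 x [u [e1 e2]].
      have [s0 [r1 [Ss0 [v [ev1 ev2 eq]]]]] := surj i (f i r0 * u).
      have E : f i s0 * f i r0 = f i r1 * f i x.
        have -> : f i r1 = f i s0 * (f i r0 * u).
          by rewrite eq mulrA ev2 mul1r.
        by rewrite -!mulrA e1 mulr1.
      have : ass (S i) (s0 * r0 - r1 * x).
        by apply/kerE; rewrite rmorphB !rmorphM E subrr.
      case=> s1 [Ss1 e]; rewrite mulrBr in e; move/eqP: e; rewrite subr_eq0 => /eqP e.
      exists (s1 * s0), (s1 * r1); split; first by apply: unitf; apply: SM.
      by rewrite -mulrA e mulrA.
    - move=> r0 x [u [e1 e2]] e.
      have : f i r0 = 0.
        by rewrite -[f i r0]mulr1 -e2 mulrA -rmorphM e raddf0 mul0r.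
      case/kerE=> t [St et]; exists t; split => //; exact: unitf.
  by apply: ((Smax i).2 S' DS') => // x; apply: unitf.
split.
  split.
  move=> LL.
  have red : forall x : R, x * x = 0 -> x = 0.
    move=> x e; apply: NNPP => nx.
    have [T [[[[_ [T0 TM]] _] _] Tx]] := LL x (introN eqP nx).
    by apply: T0; rewrite -e; apply: TM.
  have zorn : forall T, left_den T -> exists i, forall x, T x -> S i x.
    move=> T DT; have [A [MA TA]] := zorn_den DT.
    have [i Ei] := (Hmax A).1 MA.
    by exists i => x /TA /Ei.
  have inS : forall x, x != 0 -> exists i, S i x.
    move=> x nx; have [T [DT Tx]] := LL x nx.
    by have [i Ti] := zorn T DT; exists i; apply: Ti.
  have lr0 : forall r : R, lrad r -> r = 0.
    move=> r lr; apply: NNPP => nr.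
    have [i Si] := inS r (introN eqP nr).
    have [s [Ss e]] := (lradE r).1 lr i.
    by apply: (S0 i); rewrite -e; apply: SM.
  split => // i.
  have stepA : forall j, j != i -> exists y, S i y /\ ass (S j) y.
    move=> j nji; apply: NNPP => nex.
    have H : forall s t, S i s -> S j t -> s * t <> 0.
      move=> s t Ss St e; apply: nex; exists s; split => //.
      exists t; split => //. exact: (@red_comm R red s t e).
    have DG := gen_den red (Sden i) (Sden j) H.
    have e1 := (Smax i).2 _ DG (fun x Sx => gen_S _ Sx).
    have sub2 : forall x, S j x -> S i x by move=> x Sx; apply: e1; apply: gen_T.
    have e2 := (Smax j).2 _ (Sden i) sub2.
    by move/eqP: nji; apply; apply: Hdist => x; split; [apply: sub2|apply: e2].
  have stepB : forall k, exists y, S i y /\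
      forall j : 'I_n, (j < k)%N -> j != i -> ass (S j) y.
    elim=> [|k [y [Sy Hy]]]; first by exists 1; split => // j; rewrite ltn0.
    case: (ltnP k n) => hk; last first.
      exists y; split => // j hj nji; apply: Hy nji.
      rewrite ltnS leq_eqVlt in hj; case/orP: hj => // /eqP ej.
      by move: (ltn_ord j); rewrite ej ltnNge hk.
    pose jk := Ordinal hk.
    case: (eqVneq jk i) => [ei|nei].
      exists y; split => // j hj nji.
      rewrite ltnS leq_eqVlt in hj; case/orP: hj => [/eqP ej|]; last by move=> hj; apply: Hy.
      by move/eqP: nji; case; rewrite -ei; apply: val_inj.
    have [z [Sz az]] := stepA jk nei.
    exists (y * z); split; first by apply: SM.
    move=> j hj nji; rewrite ltnS leq_eqVlt in hj; case/orP: hj => [/eqP ej|hj].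
      have -> : j = jk by apply: val_inj.
      exact: ass_mull (Sden jk).1 az.
    by apply: ass_mulr; apply: Hy.
  have [y [Sy Hy]] := stepB n.
  split; first exact: one_ne0.
  move=> q nq; have [s [r [Ss [u [e1 e2 eq]]]]] := surj i q.
  have nr : ~ ass (S i) r.
    by move=> /kerE h; move/eqP: nq; apply; rewrite eq h mulr0.
  have ry_ne : r * y != 0.
    apply/eqP => e; have [t [St et]] := SD i r y Sy e.
    by apply: nr; exists t.
  have [k Sk] := inS _ ry_ne.
  have ki : k = i.
    apply: NNPP => nki.
    have : ass (S k) (r * y).
      exact: ass_mull (Sden k).1 (Hy k (ltn_ord k) (introN eqP nki)).
    by case=> s' [Ss' e']; apply: (S0 k); rewrite -e'; apply: SM.
  rewrite ki in Sk.
  have [b' [h1 h2]] := unitf i y Sy.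
  have [w [w1 w2]] := unitf i _ Sk.
  have ainv1 : f i r * (f i y * w) = 1 by rewrite mulrA -rmorphM w2.
  have wab : w * f i r * f i y = 1 by rewrite -mulrA -rmorphM.
  have wa : w * f i r = b'.
    by rewrite -[w * f i r]mulr1 -h2 mulrA wab mul1r.
  have ainv2 : (f i y * w) * f i r = 1 by rewrite -mulrA wa h2.
  exists ((f i y * w) * f i s); rewrite eq; split.
    by rewrite -mulrA (mulrA (f i r)) ainv1 mul1r e1.
  by rewrite -mulrA (mulrA (f i s)) e2 mul1r ainv2.
  move=> [lr0 div] r nr.
  have nlr : ~ lrad r by move=> h; move/eqP: nr; apply; apply: lr0.
  have [i ni] : exists i, ~ ass (S i) r.
    apply: NNPP => h; apply: nlr; apply/lradE => i; apply: NNPP => ni.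
    by apply: h; exists i.
  have fr : f i r != 0 by apply/eqP => /kerE.
  have [_ hd] := div i; have [v [e1 e2]] := hd _ fr.
  exists (S i); split; first exact: Sden.
  by apply: sat; exists v.
split.
  move=> [lr0 div]; split => // r1 r2 h.
  apply/eqP; rewrite -subr_eq0; apply/eqP; apply: lr0; apply/lradE => i.
  by apply/kerE; rewrite rmorphB h subrr.
move=> [inj div]; split => // r /lradE h; apply: inj => i.
by rewrite raddf0; apply/kerE.
Qed.
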